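(* Let $\ell\in\mathbb N$ and let $\Gamma_2$ be a finite alphabet disjoint from $\Gamma_1=\{0,1,\mathsf{inc},\mathsf{dec}\}$. There is a pushdown automaton $A$ over $\Gamma_1\cup\Gamma_2$ with 3 states and a stack alphabet of two symbols such that the projection of $L(A)\cap L'_\ell$ onto the alphabet $\Gamma_2$ (erasing all letters of $\Gamma_1$) is exactly $(\Gamma_2)^{2^{2^\ell}}$.
   Context: A pushdown automaton has transitions labelled by a letter or $\epsilon$ and a stack operation (push a symbol, pop a symbol, or no operation); it accepts a word if there is a run from the initial state with empty stack reading the word and ending in a final state with empty stack. For a word $b_1\cdots b_\ell\in\{0,1\}^\ell$ let $\mathsf{val}(b_1\cdots b_\ell)=\sum_i b_i 2^{\ell-i}$. Interpret $\mathsf{inc}(n)=n+1$, $\mathsf{dec}(n)=n-1$ and $a(n)=n$ for $a\in\Gamma_2$. $L'_\ell$ is the set of words $n_0o_1n_1\cdots o_kn_k$ with $k\ge 0$, each $n_i\in\{0,1\}^\ell$, each $o_i\in\{\mathsf{inc},\mathsf{dec}\}\cup\Gamma_2$, such that $\mathsf{val}(n_i)=o_i(\mathsf{val}(n_{i-1}))$ for all $0<i\le k$, $n_0=0^\ell=n_k$, if $o_i=\mathsf{inc}$ then $n_{i-1}\ne 1^\ell$, and if $o_i=\mathsf{dec}$ then $n_{i-1}\ne 0^\ell$. *)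

(* Defs.v *)
From mathcomp Require Import all_boot.
Set Implicit Arguments. Unset Strict Implicit. Unset Printing Implicit Defensive.

Inductive G1 := B0 | B1 | Inc | Dec.

Definition letter (G2 : Type) := (G1 + G2)%type.

Inductive stack_op (S : Type) := Push of S | Pop of S | Nop.

Record pda (Q S A : Type) := Pda {
  init : Q;
  final : Q -> bool;
  (* trans q lab op q' : transition from q to q' labelled by letter/epsilon
     (lab = None means epsilon) with stack operation op *)
  trans : Q -> option A -> stack_op S -> Q -> bool
}.

Definition apply_op (S : eqType) (o : stack_op S) (st : seq S) : option (seq S) :=
  match o with
  | Push s => Some (s :: st)
  | Pop s => if st is s' :: t then (if s' == s then Some t else None) else None
  | Nop => Some st
  end.

Definition lab_word (A : Type) (lab : option A) (w : seq A) : seq A :=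
  if lab is Some a then a :: w else w.

(* run Q S A M q st w q' st' : there is a run from configuration (q, st)
   to (q', st') reading w (stack top = head of the list). *)
Inductive run (Q : Type) (S : eqType) (A : Type) (M : pda Q S A) :
    Q -> seq S -> seq A -> Q -> seq S -> Prop :=
  | run_nil q st : run M q st [::] q st
  | run_step q lab o q1 st st1 w q2 st2 :
      trans M q lab o q1 -> apply_op o st = Some st1 ->
      run M q1 st1 w q2 st2 -> run M q st (lab_word lab w) q2 st2.

Definition accepts (Q : Type) (S : eqType) (A : Type) (M : pda Q S A) (w : seq A) : Prop :=
  exists qf, final M qf /\ run M (init M) [::] w qf [::].

(* val(b_1...b_l) = sum_i b_i 2^(l-i)  (most significant bit first) *)
Definition bval (n : seq bool) : nat := foldl (fun acc (b : bool) => acc.*2 + b) 0 n.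

Definition enc_bits (G2 : Type) (n : seq bool) : seq (letter G2) :=
  [seq (inl (if b then B1 else B0) : letter G2) | b <- n].

Definition step_ok (G2 : Type) (l : nat) (o : letter G2) (prev next : seq bool) : bool :=
  match o with
  | inl Inc => (prev != nseq l true) && (bval next == (bval prev).+1)
  | inl Dec => (prev != nseq l false) && ((bval next).+1 == bval prev)
  | inr _ => bval next == bval prev
  | _ => false
  end.

Fixpoint steps_ok (G2 : Type) (l : nat) (prev : seq bool)
    (steps : seq (letter G2 * seq bool)) : bool :=
  match steps with
  | [::] => true
  | (o, n) :: t => step_ok l o prev n && steps_ok l n t
  end.

Definition Lprime (G2 : Type) (l : nat) (w : seq (letter G2)) : Prop :=
  exists (n0 : seq bool) (steps : seq (letter G2 * seq bool)),
    [/\ size n0 = l /\ all (fun p => size p.2 == l) steps,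
        n0 = nseq l false,
        last n0 (map snd steps) = nseq l false,
        steps_ok l n0 steps &
        w = enc_bits G2 n0 ++ flatten [seq p.1 :: enc_bits G2 p.2 | p <- steps]].

Definition proj2 (G2 : Type) (w : seq (letter G2)) : seq G2 :=
  pmap (fun a : letter G2 => if a is inr g then Some g else None) w.

(* Main.v *)
Require Import Defs.
From mathcomp Require Import all_boot.
From mathcomp Require Import zify.
Set Implicit Arguments. Unset Strict Implicit. Unset Printing Implicit Defensive.

Definition qU : 'I_3 := @Ordinal 3 0 isT.
Definition qW : 'I_3 := @Ordinal 3 1 isT.
Definition qC : 'I_3 := @Ordinal 3 2 isT.
Definition s0 : 'I_2 := @Ordinal 2 0 isT.
Definition s1 : 'I_2 := @Ordinal 2 1 isT.

Lemma q_cases (q : 'I_3) : [\/ q = qU, q = qW | q = qC].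
Proof.
case: q => [[|[|[|m]]] Hm].
- by constructor 1; apply: val_inj.
- by constructor 2; apply: val_inj.
- by constructor 3; apply: val_inj.
- by [].
Qed.

Lemma s_cases (s : 'I_2) : s = s0 \/ s = s1.
Proof.
case: s => [[|[|m]] Hm].
- by left; apply: val_inj.
- by right; apply: val_inj.
- by [].
Qed.

Lemma qWU : (qW == qU) = false. Proof. by []. Qed.
Lemma qCU : (qC == qU) = false. Proof. by []. Qed.
Lemma qUW : (qU == qW) = false. Proof. by []. Qed.
Lemma qCW : (qC == qW) = false. Proof. by []. Qed.
Lemma qUC : (qU == qC) = false. Proof. by []. Qed.
Lemma qWC : (qW == qC) = false. Proof. by []. Qed.
Lemma s01 : (s0 == s1) = false. Proof. by []. Qed.
Lemma s10 : (s1 == s0) = false. Proof. by []. Qed.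

Definition isNop (o : stack_op 'I_2) := if o is Nop then true else false.
Definition isPush (s : 'I_2) (o : stack_op 'I_2) := if o is Push s' then s' == s else false.
Definition isPop (s : 'I_2) (o : stack_op 'I_2) := if o is Pop s' then s' == s else false.

Section Machine.
Variable G2 : finType.

Definition mtrans (q : 'I_3) (lab : option (letter G2)) (o : stack_op 'I_2) (q' : 'I_3) : bool :=
  match lab with
  | Some (inl B0) => [&& q == qU, q' == qU & isNop o] || [&& q == qC, q' == qC & isNop o]
                     || [&& q == qW, q' == qU & isPush s1 o]
  | Some (inl B1) => [&& q == qU, q' == qU & isNop o] || [&& q == qC, q' == qC & isNop o]
                     || [&& q == qW, q' == qW & isNop o]
  | Some (inl Inc) => [&& q == qU, q' == qU & isPush s0 o]
  | Some (inl Dec) => [&& q == qC, q' == qW & isPop s0 o]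
  | Some (inr _) => [&& q == qU, q' == qW & isPush s0 o] || [&& q == qW, q' == qC & isPop s0 o]
  | None => [&& q == qW, q' == qC & isPop s1 o]
  end.

Definition mach : pda 'I_3 'I_2 (letter G2) := Pda qU (fun q => q == qC) mtrans.

Lemma apply_isNop o st st1 : isNop o -> apply_op o st = Some st1 -> st1 = st.
Proof. by case: o => //= _ [<-]. Qed.
Lemma apply_isPush s o st st1 : isPush s o -> apply_op o st = Some st1 -> st1 = s :: st.
Proof. by case: o => //= s' /eqP -> [<-]. Qed.
Lemma apply_isPop s o st st1 : isPop s o -> apply_op o st = Some st1 -> st = s :: st1.
Proof.
case: o => //= s' /eqP ->; case: st => [|x t] //=.
by case: eqP => // -> [<-].
Qed.

Lemma run_cat q st w1 q1 st1 w2 q2 st2 :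
  run mach q st w1 q1 st1 -> run mach q1 st1 w2 q2 st2 -> run mach q st (w1 ++ w2) q2 st2.
Proof.
elim=> [//|q0 lab o q3 s st3 w q4 st4 Ht Ha Hr IH] H2.
have -> : lab_word lab w ++ w2 = lab_word lab (w ++ w2) by case: lab {Ht}.
by apply: run_step Ht Ha (IH H2).
Qed.

Lemma run_split q st w1 w2 q2 st2 :
  run mach q st (w1 ++ w2) q2 st2 ->
  exists q1 st1, run mach q st w1 q1 st1 /\ run mach q1 st1 w2 q2 st2.
Proof.
move=> H; remember (w1 ++ w2) as w0 eqn:Ew.
elim: H w1 Ew => [q0 s0'|q0 lab o q3 s st3 ww q4 st4 Ht Ha Hr IH] w1 Ew.
- case: w1 Ew => [|y w1'] //= Ew.
  exists q0, s0'; split; first exact: run_nil.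
  by rewrite -Ew; apply: run_nil.
- case: lab Ht Ew => [x|] Ht /= Ew.
  + case: w1 Ew => [|y w1'] /= Ew.
    * exists q0, s; split; first exact: run_nil.
      by rewrite -Ew; apply: (run_step (lab := Some x)) Ht Ha Hr.
    * case: Ew => <- Ew; have [q1 [st1 [H1 H2]]] := IH w1' Ew.
      exists q1, st1; split=> //.
      by apply: (run_step (lab := Some x)) Ht Ha H1.
  + have [q1 [st1 [H1 H2]]] := IH w1 Ew.
    exists q1, st1; split=> //.
    by apply: (run_step (lab := None)) Ht Ha H1.
Qed.


Definition bitl (b : bool) : letter G2 := inl (if b then B1 else B0).

Lemma enc_bitsE (n : seq bool) : enc_bits G2 n = map bitl n.
Proof. by []. Qed.

Definition onestep (q : 'I_3) (st : seq 'I_2) (x : letter G2) (q1 : 'I_3) (st1 : seq 'I_2) :=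
  (exists o, mtrans q (Some x) o q1 /\ apply_op o st = Some st1) \/
  (q = qW /\ exists st0, st = s1 :: st0 /\ exists o, mtrans qC (Some x) o q1 /\ apply_op o st0 = Some st1).

Lemma run_nil_inv q st q' st' :
  run mach q st [::] q' st' -> (q' = q /\ st' = st) \/ [/\ q = qW, q' = qC & st = s1 :: st'].
Proof.
move=> H; remember [::] as w0 eqn:Ew.
elim: H Ew => [q0 s0'|q0 lab o q3 s st3 ww q4 st4 Ht Ha Hr IH] Ew; first by left.
case: lab Ht Ew => [x|] Ht //= Ew.
have [Hq Hq3 Ho] : [/\ q0 = qW, q3 = qC & isPop s1 o].
  by move: Ht => /= /and3P [/eqP -> /eqP -> ->].
have Es := apply_isPop Ho Ha.
case: (IH Ew) => [[-> ->]|[Hc]]; last by rewrite Hq3 in Hc.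
by right; split.
Qed.

Lemma run_cons_inv q st x w q2 st2 :
  run mach q st (x :: w) q2 st2 -> exists q1 st1, onestep q st x q1 st1 /\ run mach q1 st1 w q2 st2.
Proof.
move=> H; remember (x :: w) as w0 eqn:Ew.
elim: H x w Ew => [q0 s0'|q0 lab o q3 s st3 ww q4 st4 Ht Ha Hr IH] x w Ew //.
case: lab Ht Ew => [y|] Ht /= Ew.
- case: Ew => <- <-; exists q3, st3; split=> //; left; by exists o.
- have [Hq Hq3 Ho] : [/\ q0 = qW, q3 = qC & isPop s1 o].
    by move: Ht => /= /and3P [/eqP -> /eqP -> ->].
  have Es := apply_isPop Ho Ha.
  have [q1 [st1 [H1 H2]]] := IH x w Ew.
  exists q1, st1; split=> //; right; split=> //; exists st3; split=> //.
  case: H1 => [[o' [Ht' Ha']]|[Hc _]]; last by rewrite Hq3 in Hc.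
  by exists o'; rewrite -Hq3.
Qed.

Lemma onestep_run q st x q1 st1 w q2 st2 :
  onestep q st x q1 st1 -> run mach q1 st1 w q2 st2 -> run mach q st (x :: w) q2 st2.
Proof.
case=> [[o [Ht Ha]]|[-> [st0 [-> [o [Ht Ha]]]]]] H.
- exact: (@run_step _ _ _ mach q (Some x) o q1 st st1 w q2 st2 Ht Ha H).
- have H1 := (@run_step _ _ _ mach qC (Some x) o q1 st0 st1 w q2 st2 Ht Ha H).
  exact: (@run_step _ _ _ mach qW None (Pop s1) qC (s1 :: st0) st0 (x :: w) q2 st2 isT).
Qed.

Ltac solve_os :=
  let o := fresh "o" in let Ht := fresh "Ht" in let Ha := fresh "Ha" in
  let st0 := fresh "st0" in let Est := fresh "Est" in
  case=> [[o [Ht Ha]]|[_ [st0 [Est [o [Ht Ha]]]]]];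
  move: Ht; rewrite /mtrans /= ?qWU ?qCU ?qUW ?qCW ?qUC ?qWC ?eqxx ?andbF ?andbT ?orbF /=.

Lemma os_U_bit b st q1 st1 : onestep qU st (bitl b) q1 st1 -> q1 = qU /\ st1 = st.
Proof.
have HUW : qU <> qW by [].
case=> [[o [Ht Ha]]|[Hc _]] //.
case: b Ht => /=; rewrite /mtrans /= ?qWU ?qCU ?qUW ?qCW ?qUC ?qWC ?eqxx /= ?orbF => /andP [/eqP -> Ho];
  by rewrite (apply_isNop Ho Ha).
Qed.

Lemma os_C_bit b st q1 st1 : onestep qC st (bitl b) q1 st1 -> q1 = qC /\ st1 = st.
Proof.
case=> [[o [Ht Ha]]|[Hc _]] //.
case: b Ht => /=; rewrite /mtrans /= ?qWU ?qCU ?qUW ?qCW ?qUC ?qWC ?eqxx /= ?orbF => /andP [/eqP -> Ho];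
  by rewrite (apply_isNop Ho Ha).
Qed.

Lemma os_W_bit b st q1 st1 : onestep qW st (bitl b) q1 st1 ->
  [\/ [/\ b, q1 = qW & st1 = st], [/\ ~~ b, q1 = qU & st1 = s1 :: st] | q1 = qC /\ st = s1 :: st1].
Proof.
case=> [[o [Ht Ha]]|[_ [st0 [Est [o [Ht Ha]]]]]].
- case: b Ht => /=; rewrite /mtrans /= ?qWU ?qCU ?qUW ?qCW ?qUC ?qWC ?eqxx /= ?orbF => /andP [/eqP -> Ho].
  + by constructor 1; rewrite (apply_isNop Ho Ha).
  + by constructor 2; rewrite (apply_isPush Ho Ha).
- case: b Ht => /=; rewrite /mtrans /= ?qWU ?qCU ?qUW ?qCW ?qUC ?qWC ?eqxx /= ?orbF => /andP [/eqP -> Ho];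
  by constructor 3; rewrite Est (apply_isNop Ho Ha).
Qed.

Lemma runU_bits n st q2 st2 : run mach qU st (enc_bits G2 n) q2 st2 -> q2 = qU /\ st2 = st.
Proof.
elim: n st => [|b n IH] st /=.
- by case/run_nil_inv => [[-> ->]|[]].
- case/run_cons_inv => q1 [st1 [/os_U_bit [-> ->]]]; exact: IH.
Qed.

Lemma runC_bits n st q2 st2 : run mach qC st (enc_bits G2 n) q2 st2 -> q2 = qC /\ st2 = st.
Proof.
elim: n st => [|b n IH] st /=.
- by case/run_nil_inv => [[-> ->]|[]].
- case/run_cons_inv => q1 [st1 [/os_C_bit [-> ->]]]; exact: IH.
Qed.

Lemma runW_bits n st q2 st2 : run mach qW st (enc_bits G2 n) q2 st2 ->
  [\/ [/\ all id n, q2 = qW & st2 = st], [/\ ~~ all id n, q2 = qU & st2 = s1 :: st]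
     | q2 = qC /\ st = s1 :: st2].
Proof.
elim: n st => [|b n IH] st /=.
- case/run_nil_inv => [[-> ->]|[_ -> ->]]; first by constructor 1.
  by constructor 3.
- case/run_cons_inv => q1 [st1 [/os_W_bit [[Hb -> ->]|[Hb -> ->]|[-> ->]] Hr]].
  + case: (IH _ Hr) => [[Ha -> ->]|[Ha -> ->]|[-> ->]].
    * by constructor 1; rewrite Hb Ha.
    * by constructor 2; rewrite Hb Ha.
    * by constructor 3.
  + have [-> ->] := runU_bits Hr.
    by constructor 2; rewrite (negbTE Hb).
  + have [-> ->] := runC_bits Hr.
    by constructor 3.
Qed.

Lemma runU_bits_mk n st : run mach qU st (enc_bits G2 n) qU st.
Proof.
elim: n => [|b n IH] /=; first exact: run_nil.
apply: (onestep_run (q1 := qU) (st1 := st)) => //; left; exists (Nop _).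
by case: b.
Qed.

Lemma runC_bits_mk n st : run mach qC st (enc_bits G2 n) qC st.
Proof.
elim: n => [|b n IH] /=; first exact: run_nil.
apply: (onestep_run (q1 := qC) (st1 := st)) => //; left; exists (Nop _).
by case: b.
Qed.

Lemma runW_bits_all n st : all id n -> run mach qW st (enc_bits G2 n) qW st.
Proof.
elim: n => [|b n IH] /=; first by move=> _; exact: run_nil.
case/andP=> Hb Hn; rewrite Hb.
apply: (onestep_run (q1 := qW) (st1 := st)); last exact: IH.
by left; exists (Nop _).
Qed.

Lemma runW_bits_false n st : ~~ all id n -> run mach qW st (enc_bits G2 n) qU (s1 :: st).
Proof.
elim: n => [|b n IH] //=.
case: b => /= Hn.
- apply: (onestep_run (q1 := qW) (st1 := st)); last exact: IH.
  by left; exists (Nop _).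
- apply: (onestep_run (q1 := qU) (st1 := s1 :: st)); last exact: runU_bits_mk.
  by left; exists (Push s1).
Qed.

Lemma runW_bits_pop n st : n != [::] -> run mach qW (s1 :: st) (enc_bits G2 n) qC st.
Proof.
case: n => [|b n] // _ /=.
apply: (onestep_run (q1 := qC) (st1 := st)); last exact: runC_bits_mk.
right; split=> //; exists st; split=> //; exists (Nop _); by case: b.
Qed.

Lemma os_U_inc st q1 st1 : onestep qU st (inl Inc) q1 st1 -> q1 = qU /\ st1 = s0 :: st.
Proof.
case=> [[o [Ht Ha]]|[Hc _]] //.
by move: Ht; rewrite /= ?qUW ?qWU ?qCU ?qUC ?qWC ?qCW ?eqxx /= ?orbF => /andP [/eqP -> Ho]; rewrite (apply_isPush Ho Ha).
Qed.
Lemma os_U_dec st q1 st1 : onestep qU st (inl Dec) q1 st1 -> False.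
Proof. by case=> [[o [Ht Ha]]|[Hc _]]. Qed.
Lemma os_U_a g st q1 st1 : onestep qU st (inr g) q1 st1 -> q1 = qW /\ st1 = s0 :: st.
Proof.
case=> [[o [Ht Ha]]|[Hc _]] //.
by move: Ht; rewrite /= ?qUW ?qWU ?qCU ?qUC ?qWC ?qCW ?eqxx /= ?orbF => /andP [/eqP -> Ho]; rewrite (apply_isPush Ho Ha).
Qed.
Lemma os_W_inc st q1 st1 : onestep qW st (inl Inc) q1 st1 -> False.
Proof. by case=> [[o [Ht Ha]]|[_ [st0 [_ [o [Ht Ha]]]]]]. Qed.
Lemma os_W_dec st q1 st1 : onestep qW st (inl Dec) q1 st1 -> q1 = qW /\ st = s1 :: s0 :: st1.
Proof.
case=> [[o [Ht Ha]]|[_ [st0 [-> [o [Ht Ha]]]]]] //.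
by move: Ht; rewrite /= ?qUW ?qWU ?qCU ?qUC ?qWC ?qCW ?eqxx /= ?orbF => /andP [/eqP -> Ho]; rewrite (apply_isPop Ho Ha).
Qed.
Lemma os_W_a g st q1 st1 : onestep qW st (inr g) q1 st1 -> q1 = qC /\ st = s0 :: st1.
Proof.
case=> [[o [Ht Ha]]|[_ [st0 [-> [o [Ht Ha]]]]]] //.
by move: Ht; rewrite /= ?qUW ?qWU ?qCU ?qUC ?qWC ?qCW ?eqxx /= ?orbF => /andP [/eqP -> Ho]; rewrite (apply_isPop Ho Ha).
Qed.
Lemma os_C_inc st q1 st1 : onestep qC st (inl Inc) q1 st1 -> False.
Proof. by case=> [[o [Ht Ha]]|[Hc _]]. Qed.
Lemma os_C_dec st q1 st1 : onestep qC st (inl Dec) q1 st1 -> q1 = qW /\ st = s0 :: st1.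
Proof.
case=> [[o [Ht Ha]]|[Hc _]] //.
by move: Ht; rewrite /= ?qUW ?qWU ?qCU ?qUC ?qWC ?qCW ?eqxx /= ?orbF => /andP [/eqP -> Ho]; rewrite (apply_isPop Ho Ha).
Qed.
Lemma os_C_a g st q1 st1 : onestep qC st (inr g) q1 st1 -> False.
Proof. by case=> [[o [Ht Ha]]|[Hc _]]. Qed.

End Machine.


Lemma foldl_bv a n : foldl (fun acc (b : bool) => acc.*2 + b) a n = a * 2 ^ size n + bval n.
Proof.
rewrite /bval; elim: n a => [|b n IH] a /=; first by rewrite muln1 addn0.
rewrite IH [in RHS]IH expnS; lia.
Qed.

Lemma bval_cons b n : bval (b :: n) = b * 2 ^ size n + bval n.
Proof. by rewrite {1}/bval /= foldl_bv; case: b => /=; lia. Qed.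

Lemma bval_rcons n b : bval (rcons n b) = (bval n).*2 + b.
Proof. by rewrite /bval foldl_rcons. Qed.

Lemma bval_lt n : bval n < 2 ^ size n.
Proof.
elim: n => [|b n IH] //; rewrite bval_cons /= expnS.
case: b => /=; lia.
Qed.

Lemma bval_all n : ((bval n).+1 == 2 ^ size n) = all id n.
Proof.
elim: n => [|b n IH] //; rewrite bval_cons /= expnS.
have := bval_lt n; case: b => /= H.
- rewrite -IH; apply/eqP/eqP; lia.
- apply/eqP; lia.
Qed.

Lemma nseq_true k n : size n = k -> (n == nseq k true) = all id n.
Proof.
move=> <-; elim: n => [|b n IH] //=.
by rewrite eqseq_cons IH; case: b.
Qed.

Lemma nseq_false k n : size n = k -> (n == nseq k false) = (bval n == 0).
Proof.
move=> <-; elim: n => [|b n IH] //=.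
rewrite eqseq_cons IH bval_cons; case: b => /=.
- symmetry; apply/eqP; have := expn_gt0 2 (size n); lia.
- by rewrite mul0n add0n.
Qed.

Lemma bval_nseq_false k : bval (nseq k false) = 0.
Proof. by elim: k => [|k IH] //=; rewrite bval_cons /= mul0n. Qed.

Fixpoint bits_of (k v : nat) : seq bool :=
  if k is k'.+1 then rcons (bits_of k' v./2) (odd v) else [::].

Lemma size_bits_of k v : size (bits_of k v) = k.
Proof. by elim: k v => [|k IH] v //=; rewrite size_rcons IH. Qed.

Lemma bval_bits_of k v : v < 2 ^ k -> bval (bits_of k v) = v.
Proof.
elim: k v => [|k IH] v /=; first by rewrite expn0; case: v.
move=> Hv; rewrite bval_rcons IH; last by rewrite ltn_half_double -mul2n -expnS.
by rewrite -[RHS]odd_double_half addnC.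
Qed.

Lemma bits_of_0 k : bits_of k 0 = nseq k false.
Proof.
elim: k => [|k IH] //=; rewrite IH.
by elim: k {IH} => [|k IH] //=; rewrite IH.
Qed.


Inductive Enc : seq 'I_2 -> seq bool -> Prop :=
| Enc_nil : Enc [::] [::]
| Enc_0 st bs : Enc st bs -> Enc (s0 :: st) (false :: bs)
| Enc_1 st bs : Enc st bs -> Enc (s0 :: s1 :: st) (true :: bs).

Definition num (bs : seq bool) : nat := foldr (fun (b : bool) acc => b + acc.*2) 0 bs.
Definition zc (st : seq 'I_2) : nat := count_mem s0 st.

Lemma zc_cons0 st : zc (s0 :: st) = (zc st).+1.
Proof. by rewrite /zc /= ?eqxx. Qed.
Lemma zc_cons1 st : zc (s1 :: st) = zc st.
Proof. by rewrite /zc /=. Qed.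

Lemma Enc_zc st bs : Enc st bs -> zc st = size bs.
Proof. by elim=> [|st' bs' _ IH|st' bs' _ IH] //=; rewrite ?zc_cons0 ?zc_cons1 IH. Qed.

Lemma Enc_s1 st bs : Enc (s1 :: st) bs -> False.
Proof. by move=> H; inversion H. Qed.

Lemma Enc_s0_inv st bs : Enc (s0 :: st) bs ->
  (exists bs', bs = false :: bs' /\ Enc st bs') \/
  (exists st' bs', [/\ st = s1 :: st', bs = true :: bs' & Enc st' bs']).
Proof.
move=> H; inversion H; subst; first by left; exists bs0.
by right; exists st0, bs0.
Qed.

Definition isAb (G2 : Type) (x : letter G2) : bool := if x is inr _ then true else false.

Section Analysis.
Variable G2 : finType.
Variable l : nat.
Local Notation N := (2 ^ l).
Local Notation mach := (mach G2).

Definition LegitX (q : 'I_3) (v : nat) (st : seq 'I_2) (x : nat) : Prop :=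
  (q = qU /\ exists bs, size bs = v /\
     ((Enc st bs /\ x = num bs * 2 ^ (N - v)) \/
      (exists st', [/\ st = s1 :: st', Enc st' bs & x = num bs * 2 ^ (N - v) + 2 ^ (N - v.+1)]))) \/
  (q = qW /\ v.+1 = N /\ exists st' bs, [/\ st = s0 :: st', Enc st' bs, size bs = v & x = (num bs).*2.+1]) \/
  (q = qC /\ exists bs, [/\ size bs = v, Enc st bs & x = (num bs).+1 * 2 ^ (N - v)]).

Definition Inv (q : 'I_3) (v : nat) (st : seq 'I_2) : Prop :=
  (q = qW -> v.+1 = N /\ v < zc st) /\ (q <> qW -> v <= zc st).

Lemma LegitU v st x : LegitX qU v st x ->
  exists bs, size bs = v /\
     ((Enc st bs /\ x = num bs * 2 ^ (N - v)) \/
      (exists st', [/\ st = s1 :: st', Enc st' bs & x = num bs * 2 ^ (N - v) + 2 ^ (N - v.+1)])).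
Proof. by case=> [[_ H]|[[Hc _]|[Hc _]]]. Qed.

Lemma LegitW v st x : LegitX qW v st x ->
  v.+1 = N /\ exists st' bs, [/\ st = s0 :: st', Enc st' bs, size bs = v & x = (num bs).*2.+1].
Proof. by case=> [[Hc _]|[[_ H]|[Hc _]]]. Qed.

Lemma LegitC v st x : LegitX qC v st x ->
  exists bs, [/\ size bs = v, Enc st bs & x = (num bs).+1 * 2 ^ (N - v)].
Proof. by case=> [[Hc _]|[[Hc _]|[_ H]]]. Qed.

Lemma expN_split v : v < N -> 2 ^ (N - v) = 2 * 2 ^ (N - v.+1).
Proof. by move=> H; rewrite -expnS; congr (2 ^ _); lia. Qed.

Lemma qUW_neq : qU <> qW. Proof. by move/(congr1 val). Qed.
Lemma qCW_neq : qC <> qW. Proof. by move/(congr1 val). Qed.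
Lemma qUC_neq : qU <> qC. Proof. by move/(congr1 val). Qed.
Lemma s01_neq : s0 <> s1. Proof. by move/(congr1 val). Qed.

Lemma LegitX_U_inc v st x2 : v.+1 < N -> LegitX qU v.+1 (s0 :: st) x2 -> exists x, LegitX qU v st x /\ x2 = x.
Proof.
move=> Hv /LegitU [bs [Hsz [[HE ->]|[st' [Hc _ _]]]]]; last by case: Hc.
have Hs := expN_split (ltnW Hv).
case/Enc_s0_inv: HE => [[bs' [Ebs HE]]|[st' [bs' [Est Ebs HE]]]]; subst bs.
- exists (num bs' * 2 ^ (N - v)); split; last by rewrite Hs /=; lia.
  left; split=> //; exists bs'; split; first by move: Hsz => /= [].
  by left.
- exists (num bs' * 2 ^ (N - v) + 2 ^ (N - v.+1)); split; last by rewrite Hs /=; lia.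
  left; split=> //; exists bs'; split; first by move: Hsz => /= [].
  by right; exists st'.
Qed.

Lemma step_inc q st n n' q2 st2 : size n = l -> size n' = l -> bval n' = (bval n).+1 ->
  Inv q (bval n) st -> run mach q st (inl Inc :: enc_bits G2 n') q2 st2 ->
  Inv q2 (bval n') st2 /\
  (forall x2, LegitX q2 (bval n') st2 x2 -> exists x, LegitX q (bval n) st x /\ x2 = x).
Proof.
move=> Hn Hn' Hvv [HIW HInW] /run_cons_inv [q1 [st1 [Hos Hr]]].
have Hv' : bval n' < N by rewrite -Hn'; exact: bval_lt.
case: (q_cases q) => Hq; subst q.
- have [E1 E2] := os_U_inc Hos; subst q1 st1.
  have [-> ->] := runU_bits Hr.
  have Hle := HInW qUW_neq.
  split; first by split=> [/qUW_neq|_] //; rewrite zc_cons0 Hvv.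
  by move=> x2; rewrite Hvv; apply: LegitX_U_inc; rewrite -Hvv.
- by case: (os_W_inc Hos).
- by case: (os_C_inc Hos).
Qed.

Lemma step_dec q st n n' q2 st2 : size n = l -> size n' = l -> bval n = (bval n').+1 ->
  Inv q (bval n) st -> run mach q st (inl Dec :: enc_bits G2 n') q2 st2 ->
  Inv q2 (bval n') st2 /\
  (forall x2, LegitX q2 (bval n') st2 x2 -> exists x, LegitX q (bval n) st x /\ x2 = x).
Proof.
move=> Hn Hn' Hvv [HIW HInW] /run_cons_inv [q1 [st1 [Hos Hr]]].
have Hv : bval n < N by rewrite -Hn; exact: bval_lt.
have Hall : all id n' -> (bval n').+1 = N by rewrite -bval_all Hn' => /eqP.
case: (q_cases q) => Hq; subst q.
- by case: (os_U_dec Hos).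
- have [E1 E2] := os_W_dec Hos; subst q1 st.
  have [HN Hz] := HIW erefl.
  rewrite !zc_cons1 zc_cons0 in Hz.
  case: (runW_bits Hr) => [[Ha -> ->]|[Ha -> ->]|[-> E]].
  + by have := Hall Ha; lia.
  + split; first by split=> [/qUW_neq|_] //; rewrite zc_cons1; lia.
    move=> x2 /LegitU [bs [Hsz [[HE _]|[st' [[<-] HE _]]]]]; first by case: (Enc_s1 HE).
    by have := Enc_zc HE; lia.
  + subst st1; rewrite zc_cons1 in Hz.
    split; first by split=> [/qCW_neq|_] //; lia.
    move=> x2 /LegitC [bs [Hsz HE _]].
    by have := Enc_zc HE; lia.
- have [E1 E2] := os_C_dec Hos; subst q1 st.
  have Hle := HInW qCW_neq; rewrite zc_cons0 in Hle.
  case: (runW_bits Hr) => [[Ha -> ->]|[Ha -> ->]|[-> E]].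
  + by have := Hall Ha; lia.
  + split; first by split=> [/qUW_neq|_] //; rewrite zc_cons1; lia.
    move=> x2 /LegitU [bs [Hsz [[HE _]|[st' [[<-] HE ->]]]]]; first by case: (Enc_s1 HE).
    exists ((num (false :: bs)).+1 * 2 ^ (N - bval n)); split.
    * right; right; split=> //; exists (false :: bs); split=> //=; first by rewrite Hsz Hvv.
      exact: Enc_0.
    * rewrite Hvv in Hv *; rewrite (expN_split (ltnW Hv)) /=; lia.
  + subst st1; rewrite zc_cons1 in Hle.
    split; first by split=> [/qCW_neq|_] //; lia.
    move=> x2 /LegitC [bs [Hsz HE ->]].
    exists ((num (true :: bs)).+1 * 2 ^ (N - bval n)); split.
    * right; right; split=> //; exists (true :: bs); split=> //=; first by rewrite Hsz Hvv.
      exact: Enc_1.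
    * rewrite Hvv in Hv *; rewrite (expN_split (ltnW Hv)) /=; lia.
Qed.

Lemma step_a q st g n n' q2 st2 : size n = l -> size n' = l -> bval n' = bval n ->
  Inv q (bval n) st -> run mach q st (inr g :: enc_bits G2 n') q2 st2 ->
  Inv q2 (bval n') st2 /\
  (forall x2, LegitX q2 (bval n') st2 x2 -> exists x, LegitX q (bval n) st x /\ x2 = x.+1).
Proof.
move=> Hn Hn' Hvv [HIW HInW] /run_cons_inv [q1 [st1 [Hos Hr]]].
have Hall : all id n' -> (bval n').+1 = N by rewrite -bval_all Hn' => /eqP.
rewrite Hvv in Hall *.
case: (q_cases q) => Hq; subst q.
- have [E1 E2] := os_U_a Hos; subst q1 st1.
  have Hle := HInW qUW_neq.
  case: (runW_bits Hr) => [[Ha -> ->]|[Ha -> ->]|[_ Hc]]; last by case: Hc.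
  + have HN := Hall Ha.
    split; first by split=> [_|//]; rewrite zc_cons0; split.
    move=> x2 /LegitW [_ [st' [bs [[<-] HE Hsz ->]]]].
    exists (num bs * 2 ^ (N - bval n)); split.
    * left; split=> //; exists bs; split=> //; by left.
    * have -> : N - bval n = 1 by lia.
      rewrite expn1; lia.
  + split; first by split=> [/qUW_neq|_] //; rewrite zc_cons1 zc_cons0; lia.
    move=> x2 /LegitU [bs [Hsz [[HE _]|[st' [[<-] HE _]]]]]; first by case: (Enc_s1 HE).
    by have := Enc_zc HE; rewrite zc_cons0; lia.
- have [E1 E2] := os_W_a Hos; subst q1 st.
  have [HN Hz] := HIW erefl; rewrite zc_cons0 in Hz.
  have [-> ->] := runC_bits Hr.
  split; first by split=> [/qCW_neq|_] //; lia.
  move=> x2 /LegitC [bs [Hsz HE ->]].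
  exists (num bs).*2.+1; split.
  + right; left; split=> //; split=> //; exists st1, bs; split=> //.
  + have -> : N - bval n = 1 by lia.
    rewrite expn1; lia.
- by case: (os_C_a Hos).
Qed.

Lemma end_lemma q st : Inv q 0 st -> run mach q st [::] qC [::] -> LegitX q 0 st (2 ^ N).
Proof.
move=> [HIW _] /run_nil_inv [[E1 E2]|[E1 _ E2]]; subst.
- right; right; split=> //; exists [::]; split; [by []|exact: Enc_nil|].
  by rewrite /= subn0 mul1n.
- by have [_ ] := HIW erefl.
Qed.

Definition cntA (steps : seq (letter G2 * seq bool)) := count (fun p => isAb p.1) steps.

Lemma back steps : forall q st n, size n = l -> all (fun p => size p.2 == l) steps ->
  steps_ok l n steps -> last n (map snd steps) = nseq l false -> Inv q (bval n) st ->
  run mach q st (flatten [seq p.1 :: enc_bits G2 p.2 | p <- steps]) qC [::] ->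
  exists x, LegitX q (bval n) st x /\ x + cntA steps = 2 ^ N.
Proof.
elim: steps => [|[o n'] rest IH] q st n Hn Hall Hok Hlast HI Hr.
- rewrite /= in Hlast; subst n; rewrite bval_nseq_false in HI *.
  by exists (2 ^ N); split; [exact: end_lemma|rewrite /cntA addn0].
- move: Hall => /= /andP [/eqP Hn' Hall].
  move: Hok => /= /andP [Hok Hok'].
  move: Hlast => /= Hlast.
  move: Hr; rewrite /= -cat_cons => /run_split [q2 [st2 [H1 H2]]].
  have Hstep : Inv q2 (bval n') st2 /\
     (forall x2, LegitX q2 (bval n') st2 x2 -> exists x, LegitX q (bval n) st x /\ x2 = x + isAb o).
    case: o Hok H1 => [[| | | ]|g] //= Hok H1.
    + case/andP: Hok => _ /eqP Hvv.
      have [HI2 HT] := step_inc Hn Hn' Hvv HI H1.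
      split=> // x2 /HT [x [HL ->]]; exists x; split=> //; by rewrite addn0.
    + case/andP: Hok => _ /eqP Hvv.
      have [HI2 HT] := step_dec Hn Hn' (esym Hvv) HI H1.
      split=> // x2 /HT [x [HL ->]]; exists x; split=> //; by rewrite addn0.
    + move/eqP: Hok => Hvv.
      have [HI2 HT] := step_a Hn Hn' Hvv HI H1.
      split=> // x2 /HT [x [HL ->]]; exists x; split=> //; by rewrite addn1.
  case: Hstep => HI2 HT.
  have [x2 [HL2 Hx2]] := IH q2 st2 n' Hn' Hall Hok' Hlast HI2 H2.
  have [x [HL Ex]] := HT x2 HL2.
  exists x; split=> //; rewrite -Hx2 Ex /cntA /=; lia.
Qed.

Lemma size_proj2 (w : seq (letter G2)) : size (proj2 w) = count (@isAb G2) w.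
Proof. by rewrite /proj2 size_pmap; apply: eq_count => -[]. Qed.

Lemma count_enc n : count (@isAb G2) (enc_bits G2 n) = 0.
Proof. by elim: n => [|b n IH] //=; rewrite IH; case: b. Qed.

Lemma count_flat steps :
  count (@isAb G2) (flatten [seq p.1 :: enc_bits G2 p.2 | p <- steps]) = cntA steps.
Proof.
elim: steps => [|[o n] rest IH] //=.
by rewrite count_cat /= count_enc IH /cntA /=; lia.
Qed.

Lemma fwd w : accepts mach w -> Lprime l w -> size (proj2 w) = 2 ^ N.
Proof.
case=> qf [Hf Hr] [n0 [steps [[Hn0 Hall] En0 Hlast Hok Ew]]].
have Eqf : qf = qC by apply/eqP.
subst qf w.
move/run_split: Hr => [q1 [st1 [H1 H2]]].
have [E1 E2] := runU_bits H1; subst q1 st1.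
have HI : Inv qU (bval n0) [::].
  by rewrite En0 bval_nseq_false; split=> [/qUW_neq|].
have [x [HL Hx]] := back Hn0 Hall Hok Hlast HI H2.
move: HL; rewrite En0 bval_nseq_false => /LegitU [bs [Hsz [[HE Ex]|[st' [Hc _ _]]]]] //.
move: Hsz; case: bs HE Ex => [|b bs] // _ Ex _.
rewrite Ex /= mul0n add0n in Hx.
by rewrite size_proj2 count_cat count_enc count_flat.
Qed.

End Analysis.


Section Construct.
Variable G2 : finType.
Variable l : nat.
Local Notation N := (2 ^ l).
Local Notation mach := (mach G2).

Definition wd (steps : seq (letter G2 * seq bool)) : seq (letter G2) :=
  flatten [seq p.1 :: enc_bits G2 p.2 | p <- steps].

Lemma wd_cat s1 s2 : wd (s1 ++ s2) = wd s1 ++ wd s2.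
Proof. by rewrite /wd map_cat flatten_cat. Qed.
Lemma wd_cons p s : wd (p :: s) = p.1 :: enc_bits G2 p.2 ++ wd s.
Proof. by []. Qed.

Definition pstep (p : letter G2 * seq bool) : option G2 := if p.1 is inr g then Some g else None.

Lemma proj2_enc n : proj2 (enc_bits G2 n) = [::].
Proof. by elim: n => [|b n IH] //=; case: b. Qed.

Lemma proj2_wd s : proj2 (wd s) = pmap pstep s.
Proof.
elim: s => [|[o n] s IH] //=.
rewrite /proj2 /= pmap_cat -/(proj2 _) proj2_enc -/(proj2 _) -/(wd s) IH.
by case: o.
Qed.

Fixpoint sweep (k v : nat) (u : seq G2) : seq (letter G2 * seq bool) :=
  match k with
  | 0 => [seq ((inr g : letter G2), bits_of l v) | g <- u]
  | k'.+1 => ((inl Inc : letter G2), bits_of l v.+1) :: sweep k' v.+1 (take (2 ^ k) u)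
             ++ ((inl Dec : letter G2), bits_of l v) :: ((inl Inc : letter G2), bits_of l v.+1)
             :: sweep k' v.+1 (drop (2 ^ k) u) ++ [:: ((inl Dec : letter G2), bits_of l v)]
  end.

Lemma sweep_sizes k v u : all (fun p => size p.2 == l) (sweep k v u).
Proof.
elim: k v u => [|k IH] v u /=.
- by elim: u => [|g u IHu] //=; rewrite size_bits_of eqxx.
- rewrite size_bits_of eqxx /= all_cat IH /= size_bits_of eqxx /= size_bits_of eqxx /=.
  by rewrite all_cat IH /= size_bits_of eqxx.
Qed.

Lemma sweep_last k v u x : size u = 2 ^ k.+1 -> last x (map snd (sweep k v u)) = bits_of l v.
Proof.
case: k => [|k] /= Hu.
- by case: u Hu => [|g1 [|g2 [|g3 u]]].
- by rewrite map_cat /= map_cat last_cat /= last_cat.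
Qed.

Lemma sweep_proj k v u : pmap pstep (sweep k v u) = u.
Proof.
elim: k v u => [|k IH] v u /=.
- by elim: u => [|g u IHu] //=; rewrite IHu.
- by rewrite pmap_cat /= pmap_cat /= !IH cats0 cat_take_drop.
Qed.

Lemma steps_ok_cat p (s1 s2 : seq (letter G2 * seq bool)) :
  steps_ok l p (s1 ++ s2) = steps_ok l p s1 && steps_ok l (last p (map snd s1)) s2.
Proof.
elim: s1 p => [|[o n] s1 IH] p //=.
by rewrite IH andbA.
Qed.

Lemma bits_top v : v < N -> all id (bits_of l v) = (v.+1 == N).
Proof. by move=> Hv; rewrite -bval_all size_bits_of bval_bits_of. Qed.

Lemma sweep_ok k v u : v + k.+1 = N -> size u = 2 ^ k.+1 ->
  steps_ok l (bits_of l v) (sweep k v u).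
Proof.
elim: k v u => [|k IH] v u Hvk Hu /=.
- by elim: u {Hu} => [|g u IHu] //=; rewrite eqxx.
- have Hv : v.+1 < N by lia.
  have Hv1 : v < N by lia.
  have Htake : size (take (2 ^ k.+1) u) = 2 ^ k.+1.
    by rewrite size_take Hu ltn_exp2l // ltnSn.
  have Hdrop : size (drop (2 ^ k.+1) u) = 2 ^ k.+1.
    by rewrite size_drop Hu expnS; lia.
  have E1 := bval_bits_of Hv; have E0 := bval_bits_of Hv1.
  rewrite (nseq_true (size_bits_of l v)) (bits_top Hv1) E1 E0 eqxx (ltn_eqF Hv) /=.
  rewrite steps_ok_cat IH //; last by lia.
  rewrite sweep_last //= (nseq_false (size_bits_of l v.+1)) E1 E0 eqxx /=.
  rewrite (nseq_true (size_bits_of l v)) (bits_top Hv1) (ltn_eqF Hv) /=.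
  rewrite steps_ok_cat IH //; last by lia.
  by rewrite sweep_last //= (nseq_false (size_bits_of l v.+1)) E1 E0 eqxx.
Qed.

Lemma sweep_run k v u st : v + k.+1 = N -> size u = 2 ^ k.+1 ->
  run mach qU st (wd (sweep k v u)) qC st.
Proof.
elim: k v u st => [|k IH] v u st Hvk Hu.
- case: u Hu => [|g1 [|g2 [|g3 u]]] // _.
  have Hv : v < N by lia.
  have Hall : all id (bits_of l v) by rewrite (bits_top Hv) -Hvk addn1.
  rewrite /wd /= cats0.
  apply: (onestep_run (q1 := qW) (st1 := s0 :: st)); first by left; exists (Push s0).
  apply: run_cat; first exact: runW_bits_all.
  apply: (onestep_run (q1 := qC) (st1 := st)); first by left; exists (Pop s0) => /=; rewrite eqxx.
  exact: runC_bits_mk.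
- have Hv : v.+1 < N by lia.
  have Hv1 : v < N by lia.
  have Htake : size (take (2 ^ k.+1) u) = 2 ^ k.+1.
    by rewrite size_take Hu ltn_exp2l // ltnSn.
  have Hdrop : size (drop (2 ^ k.+1) u) = 2 ^ k.+1.
    by rewrite size_drop Hu expnS; lia.
  have Hnall : ~~ all id (bits_of l v) by rewrite (bits_top Hv1) (ltn_eqF Hv).
  have Hne : bits_of l v != [::].
    by rewrite -size_eq0 size_bits_of; apply/eqP => Hl; move: Hv; rewrite Hl.
  rewrite /= wd_cons wd_cat wd_cons wd_cons wd_cat wd_cons /wd /= cats0.
  apply: (onestep_run (q1 := qU) (st1 := s0 :: st)); first by left; exists (Push s0).
  apply: run_cat; first exact: runU_bits_mk.
  apply: run_cat; first by apply: IH => //; lia.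
  apply: (onestep_run (q1 := qW) (st1 := st)); first by left; exists (Pop s0) => /=; rewrite eqxx.
  apply: run_cat; first exact: runW_bits_false.
  apply: (onestep_run (q1 := qU) (st1 := s0 :: s1 :: st)); first by left; exists (Push s0).
  apply: run_cat; first exact: runU_bits_mk.
  apply: run_cat; first by apply: IH => //; lia.
  apply: (onestep_run (q1 := qW) (st1 := s1 :: st)); first by left; exists (Pop s0) => /=; rewrite eqxx.
  exact: runW_bits_pop.
Qed.

Lemma bwd u : size u = 2 ^ N -> exists w, [/\ accepts mach w, Lprime l w & proj2 w = u].
Proof.
move=> Hu.
have HN : 0 < N by rewrite expn_gt0.
have Hk : 0 + N.-1.+1 = N by lia.
have Hu' : size u = 2 ^ N.-1.+1 by rewrite prednK.
exists (enc_bits G2 (nseq l false) ++ wd (sweep N.-1 0 u)); split.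
- exists qC; split; first by rewrite /= eqxx.
  apply: run_cat; first exact: runU_bits_mk.
  exact: sweep_run.
- exists (nseq l false), (sweep N.-1 0 u); split=> //.
  + by rewrite size_nseq sweep_sizes.
  + by rewrite sweep_last // bits_of_0.
  + by rewrite -bits_of_0; apply: sweep_ok.
- by rewrite /proj2 pmap_cat -/(proj2 _) proj2_enc -/(proj2 _) proj2_wd sweep_proj.
Qed.

End Construct.

Theorem claim4p9 (l : nat) (G2 : finType) (hG2 : 0 < #|G2|) :
  exists M : pda 'I_3 'I_2 (letter G2),
    forall u : seq G2,
      (exists w : seq (letter G2), [/\ accepts M w, Lprime l w & proj2 w = u])
      <-> size u = 2 ^ (2 ^ l).
Proof.
exists (mach G2) => u; split.
- by case=> w [Ha HL <-]; exact: fwd Ha HL.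
- exact: bwd.
Qed.
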